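(* There exist connected graphs $G$ and $H$ that have no non-trivial common factor (i.e., there is no non-trivial graph $K$ with $K\mid G$ and $K\mid H$) and yet are not weakly disjoint.
   Context: A weight function on finite $U$ is $\alpha:U\times U\to\mathbb{R}$, $\alpha\ge0$, symmetric, summing to $1$; degree $p(u)=\sum_{u'}\alpha(u,u')$; a graph is $(U,\alpha)$ (self-loops allowed); connected means any two distinct vertices are joined by a path of edges $(u,u')$ with $\alpha(u,u')>0$; non-trivial means at least two vertices have positive degree. For graphs $G=(U,\alpha)$, $H=(V,\beta)$ with degrees $p,q$, $H\mid G$ means there is a surjective $\phi:U\to V$ with (i) $q(v)=\sum_{u\in\phi^{-1}(v)}p(u)$ for all $v$, and (ii) $q(v)\sum_{u'\in\phi^{-1}(v')}\alpha(u,u')=p(u)\beta(v,v')$ for all $v,v'$, $u\in\phi^{-1}(v)$. A weight joining of $\alpha,\beta$ is a weight function $\gamma$ on $U\times V$ with degree $r(u,v)=\sum_{(u',v')}\gamma((u,v),(u',v'))$ such that $\sum_v r(u,v)=p(u)$, $\sum_u r(u,v)=q(v)$, $p(u)\sum_{\tilde v}\gamma((u,v),(u',\tilde v))=\alpha(u,u')r(u,v)$ and $q(v)\sum_{\tilde u}\gamma((u,v),(\tilde u,v'))=\beta(v,v')r(u,v)$. $G,H$ are weakly disjoint if every weight joining has degree $r(u,v)=p(u)q(v)$. *)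

(* Defs.v *)
From HB Require Import structures.
From mathcomp Require Import all_boot all_order all_algebra.
From mathcomp Require Import Rstruct.
From Stdlib Require Import Rdefinitions.
Set Implicit Arguments. Unset Strict Implicit. Unset Printing Implicit Defensive.
Import Order.TTheory GRing.Theory Num.Theory.
Local Open Scope ring_scope.

Definition weight_fun (U : finType) (a : U -> U -> R) : Prop :=
  (forall u u', 0 <= a u u') /\ (forall u u', a u u' = a u' u) /\
  \sum_(u : U) \sum_(u' : U) a u u' = 1.

Definition deg (U : finType) (a : U -> U -> R) (u : U) : R :=
  \sum_(u' : U) a u u'.

Definition gconnected (U : finType) (a : U -> U -> R) : Prop :=
  forall u u' : U, u != u' -> connect (fun x y => 0 < a x y) u u'.

Definition nontrivial (U : finType) (a : U -> U -> R) : Prop :=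
  exists u1 u2 : U, u1 != u2 /\ 0 < deg a u1 /\ 0 < deg a u2.

(* gdiv beta alpha : the graph (V,beta) divides the graph (U,alpha), H | G *)
Definition gdiv (V U : finType) (b : V -> V -> R) (a : U -> U -> R) : Prop :=
  exists phi : U -> V,
    (forall v, exists u, phi u = v) /\
    (forall v, deg b v = \sum_(u | phi u == v) deg a u) /\
    (forall v v' u, phi u = v ->
       deg b v * (\sum_(u' | phi u' == v') a u u') = deg a u * b v v').

Definition weight_joining (U V : finType) (a : U -> U -> R) (b : V -> V -> R)
  (g : (U * V)%type -> (U * V)%type -> R) : Prop :=
  weight_fun g /\
  (forall u, \sum_(v : V) deg g (u, v) = deg a u) /\
  (forall v, \sum_(u : U) deg g (u, v) = deg b v) /\
  (forall u v u', deg a u * (\sum_(v' : V) g (u, v) (u', v')) = a u u' * deg g (u, v)) /\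
  (forall u v v', deg b v * (\sum_(u' : U) g (u, v) (u', v')) = b v v' * deg g (u, v)).

Definition weakly_disjoint (U V : finType) (a : U -> U -> R) (b : V -> V -> R) : Prop :=
  forall g, weight_joining a b g -> forall u v, deg g (u, v) = deg a u * deg b v.

(* Main.v *)
Require Import Defs.
From mathcomp Require Import all_boot all_order all_algebra.
From mathcomp Require Import Rstruct.
From Stdlib Require Import Rdefinitions.
From mathcomp Require Import ring lra.
Set Implicit Arguments. Unset Strict Implicit. Unset Printing Implicit Defensive.
Import Order.TTheory GRing.Theory Num.Theory.
Local Open Scope ring_scope.

Definition RF : realFieldType := R.

Definition aG (u u' : bool) : RF := 1/4.
Definition qH (v : bool) : RF := if v then 2/3 else 1/3.
Definition bH (v v' : bool) : RF := qH v * qH v'.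
Definition sJ (x : bool * bool) : RF :=
  match x with
  | (false, false) => 1/3 | (false, true) => 1/6
  | (true, false) => 0 | (true, true) => 1/2 end.
Definition gJ (x y : bool * bool) : RF := sJ x * sJ y.

Lemma sumbb (F : bool * bool -> R) :
  \sum_(x : bool * bool) F x = F (true,true) + F (true,false) + F (false,true) + F (false,false).
Proof.
transitivity (\sum_(i : bool) \sum_(j : bool) F (i, j)).
  by rewrite pair_big; apply: eq_bigr => -[i j].
by rewrite !big_bool /= !addrA.
Qed.

Lemma fiber1 (W : eqType) (phi : bool -> W) (f : bool -> R) w x :
  phi x = w -> phi (~~ x) != w -> \sum_(u | phi u == w) f u = f x.
Proof.
rewrite big_mkcond big_bool /=; case: x => /= -> /negbTE ->; rewrite eqxx.
  by rewrite addr0.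
by rewrite add0r.
Qed.

Lemma degG u : deg aG u = 1/2.
Proof. rewrite /deg big_bool /= /aG; lra. Qed.

Lemma degH v : deg bH v = qH v.
Proof. rewrite /deg big_bool /= /bH /qH; case: v; lra. Qed.

Lemma degJ x : deg gJ x = sJ x.
Proof. rewrite /deg sumbb /gJ /sJ; case: x => [[] []]; lra. Qed.

Theorem proposition4p8 :
  exists (U V : finType) (a : U -> U -> R) (b : V -> V -> R),
    weight_fun a /\ weight_fun b /\ gconnected a /\ gconnected b /\
    (forall (W : finType) (c : W -> W -> R),
        weight_fun c -> nontrivial c -> ~ (gdiv c a /\ gdiv c b)) /\
    ~ weakly_disjoint a b.
Proof.
exists bool, bool, aG, bH.
split.
  split; first by move=> u u'; rewrite /aG; lra.
  split; first by [].
  rewrite !big_bool /= /aG; lra.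
split.
  split; first by move=> u u'; rewrite /bH /qH; case: u; case: u'; lra.
  split; first by move=> u u'; rewrite /bH mulrC.
  rewrite !big_bool /= /bH /qH; lra.
split.
  move=> u u' _; apply: connect1; rewrite /aG; lra.
split.
  move=> u u' _; apply: connect1; rewrite /bH /qH; case: u; case: u'; lra.
split.
  move=> W c _ [u1 [u2 [hne _]]] [[phi [phis [phideg _]]] [psi [psis [psideg _]]]].
  have key : forall (chi : bool -> W), (forall w, exists u, chi u = w) ->
      exists x, chi x = u1 /\ chi (~~ x) != u1.
    move=> chi chis; have [x1 e1] := chis u1; have [x2 e2] := chis u2.
    exists x1; split => //.
    have hx : x2 = ~~ x1.
      case: x1 e1; case: x2 e2 => e2 e1 //=; by move: hne; rewrite -e1 -e2 eqxx.
    by rewrite -hx e2 eq_sym.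
  have [x [e1 e2]] := key phi phis.
  have [y [f1 f2]] := key psi psis.
  have h1 := phideg u1; rewrite (fiber1 _ e1 e2) degG in h1.
  have h2 := psideg u1; rewrite (fiber1 _ f1 f2) degH in h2.
  move: h2; rewrite h1 /qH; case: y {f1 f2}; lra.
move=> H.
have J : weight_joining aG bH gJ.
  split.
    split; first by move=> [[] []] [[] []]; rewrite /gJ /sJ; lra.
    split; first by move=> x y; rewrite /gJ mulrC.
    rewrite !sumbb /gJ /sJ; lra.
  split; first by move=> u; rewrite big_bool /= !degJ degG /sJ; case: u; lra.
  split; first by move=> v; rewrite big_bool /= !degJ degH /sJ /qH; case: v; lra.
  split.
    move=> u v u'; rewrite degG degJ big_bool /= /gJ /aG /sJ.
    by case: u; case: v; case: u'; lra.
  move=> u v v'; rewrite degH degJ big_bool /= /gJ /bH /qH /sJ.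
  by case: u; case: v; case: v'; lra.
have := H _ J true false; rewrite degJ degG degH /sJ /qH; lra.
Qed.
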